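(* Let $k>0$ and fix $\Delta\in\mathbb{N}$. For every integer $n$ with $-\Delta\le n\le -1$, except when $\{n,n+\Delta\}=\{-1,0\}$, there is a curve $\tau\mapsto\gamma_c(\tau)$, $\tau\in(0,1/2]$, of real numbers such that $\Omega_{n,\gamma_c(\tau),\tau}=\Omega_{n+\Delta,\gamma_c(\tau),\tau}$ (the eigenvalues $i\Omega_{n,\gamma,\tau}$ and $i\Omega_{n+\Delta,\gamma,\tau}$ of $\mathcal H_0(\gamma,\tau)$ collide). All such collisions take place away from the origin, except when $\Delta$ is odd and $n=-(\Delta+1)/2$, in which case $n+\Delta=-n-1$ and the eigenvalues $i\Omega_{n,\gamma,\tau}$ and $i\Omega_{-n-1,\gamma,\tau}$ collide at the origin for $\tau=1/2$, $\gamma=\gamma_c(1/2)$.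
   Context: For $k>0$, $\gamma\in\mathbb{R}$, $\tau\in(-1/2,1/2]\setminus\{0\}$ and $n\in\mathbb{Z}$, set $\Omega_{n,\gamma,\tau}=k^3(n+\tau)\big(1-(n+\tau)^2\big)+\frac{3\gamma^2}{k(n+\tau)}$. These satisfy $\mathcal H_0(\gamma,\tau)e^{inz}=i\Omega_{n,\gamma,\tau}e^{inz}$, where $\mathcal H_0(\gamma,\tau)=k^3(\partial_z+i\tau)+k^3(\partial_z+i\tau)^3-\frac{3\gamma^2}{k}(\partial_z+i\tau)^{-1}$ on $2\pi$-periodic square-integrable functions (the zero-amplitude Floquet-Bloch linearized Konopelchenko–Dubrovsky operator), whose spectrum is $\{i\Omega_{n,\gamma,\tau}:n\in\mathbb{Z}\}$. Two eigenvalues ''collide'' at $\gamma_c$ if $\Omega_{n,\gamma_c,\tau}=\Omega_{m,\gamma_c,\tau}$ for $n\ne m$. *)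

(* Defs.v *)
From Stdlib Require Export Reals Lra Lia ZArith.
Open Scope R_scope.

Definition Omega (k : R) (n : Z) (gamma tau : R) : R :=
  let p := IZR n + tau in
  k ^ 3 * p * (1 - p ^ 2) + 3 * gamma ^ 2 / (k * p).

Definition tau_range (t : R) : Prop := 0 < t <= 1 / 2.

(* Main.v *)
Require Import Defs.
From Stdlib Require Import Reals ZArith Lra Lia Psatz.
Open Scope R_scope.

Definition Om (k p g : R) : R := k ^ 3 * p * (1 - p ^ 2) + 3 * g ^ 2 / (k * p).

Definition hh (k : R) (n : Z) (D : R) (t : R) : R :=
  let P := IZR n + t in let Q := P + D in
  - (k ^ 4 * P * Q * (P ^ 2 + P * Q + Q ^ 2 - 1)) / 3.

Lemma Omega_Om k n g t : Omega k n g t = Om k (IZR n + t) g.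
Proof. reflexivity. Qed.

Lemma Omega_Om2 k n (D : nat) g t :
  Omega k (n + Z.of_nat D) g t = Om k (IZR n + t + INR D) g.
Proof. unfold Omega, Om. rewrite plus_IZR, <- INR_IZR_INZ.
  replace (IZR n + INR D + t) with (IZR n + t + INR D) by ring. reflexivity. Qed.

Lemma diff_lem k P Q g : k <> 0 -> P <> 0 -> Q <> 0 -> Q - P <> 0 ->
  k ^ 4 * P * Q * (P ^ 2 + P * Q + Q ^ 2 - 1) + 3 * g ^ 2
  = (Om k P g - Om k Q g) * (k * P * Q) / (Q - P).
Proof. intros. unfold Om. field. auto. Qed.

Lemma val_lem k P Q g : k <> 0 -> P <> 0 ->
  3 * g ^ 2 = - (k ^ 4 * P * Q * (P ^ 2 + P * Q + Q ^ 2 - 1)) ->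
  Om k P g = k ^ 3 * (P + Q) * (1 - P ^ 2 - Q ^ 2).
Proof. intros hk hp H. unfold Om. rewrite H. field. auto. Qed.

Theorem lemma3p2 (k : R) (Delta : nat) (n : Z) :
  0 < k ->
  (- Z.of_nat Delta <= n <= -1)%Z ->
  ~ ((n = -1 /\ n + Z.of_nat Delta = 0) \/ (n = 0 /\ n + Z.of_nat Delta = -1))%Z ->
  exists gc : R -> R,
    (forall t, tau_range t -> limit1_in gc tau_range (gc t) t) /\
    (forall t, tau_range t ->
       Omega k n (gc t) t = Omega k (n + Z.of_nat Delta) (gc t) t) /\
    (forall g t, tau_range t ->
       Omega k n g t = Omega k (n + Z.of_nat Delta) g t ->
       Omega k n g t <> 0 \/
       (Nat.Odd Delta /\ (2 * n = - (Z.of_nat Delta + 1))%Z /\ t = 1 / 2)) /\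
    (Nat.Odd Delta -> (2 * n = - (Z.of_nat Delta + 1))%Z ->
       Omega k n (gc (1 / 2)) (1 / 2) = 0 /\
       Omega k (n + Z.of_nat Delta) (gc (1 / 2)) (1 / 2) = 0).
Proof.
  intros hk hn hex.
  set (D := INR Delta).
  assert (HnD : (0 <= n + Z.of_nat Delta)%Z) by lia.
  assert (Hnd : IZR n + D >= 0).
  { unfold D. rewrite INR_IZR_INZ, <- plus_IZR. apply Rle_ge, IZR_le. lia. }
  assert (Hcase : IZR n <= -2 \/ (IZR n = -1 /\ IZR n + D >= 1)).
  { destruct (Z.eq_dec n (-1)) as [e|e].
    - right. split. rewrite e; reflexivity.
      unfold D. rewrite INR_IZR_INZ, <- plus_IZR. apply Rle_ge, IZR_le. lia.
    - left. apply IZR_le. lia. }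
  assert (HDpos : D >= 1).
  { unfold D. apply Rle_ge. replace 1 with (INR 1) by reflexivity. apply le_INR. lia. }
  assert (Hn1 : IZR n <= -1) by (apply IZR_le; lia).
  assert (HF : forall t, tau_range t ->
     let P := IZR n + t in let Q := P + D in
     P < 0 /\ Q > 0 /\ P ^ 2 + P * Q + Q ^ 2 - 1 >= 0 /\ P ^ 2 + Q ^ 2 > 1).
  { intros t [t0 t1]. cbv zeta.
    destruct Hcase as [Hc|[Hc1 Hc2]].
    - assert (E : (IZR n + t) ^ 2 + (IZR n + t) * (IZR n + t + D) + (IZR n + t + D) ^ 2
        = (IZR n + t + D + (IZR n + t)/2) ^ 2 + 3/4 * (IZR n + t) ^ 2) by field.
      rewrite E. assert (0 <= (IZR n + t + D + (IZR n + t)/2) ^ 2) by (apply pow2_ge_0).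
      repeat split; nra.
    - rewrite Hc1 in *. repeat split; nra. }
  assert (Hh0 : forall t, tau_range t -> 0 <= hh k n D t).
  { intros t ht. destruct (HF t ht) as (h1 & h2 & h3 & h4). unfold hh. cbv zeta.
    set (P := IZR n + t) in *. set (Q := P + D) in *.
    assert (0 < k ^ 4) by (apply pow_lt; lra).
    assert (0 <= - (P * Q)) by nra.
    assert (0 <= k ^ 4 * (- (P * Q)) * (P ^ 2 + P * Q + Q ^ 2 - 1)).
    { apply Rmult_le_pos; [apply Rmult_le_pos|]; lra. }
    lra. }
  assert (Hcol : forall t, tau_range t ->
     3 * (sqrt (hh k n D t)) ^ 2 =
     - (k ^ 4 * (IZR n + t) * (IZR n + t + D) *
        ((IZR n + t) ^ 2 + (IZR n + t) * (IZR n + t + D) + (IZR n + t + D) ^ 2 - 1))).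
  { intros t ht. rewrite <- Rsqr_pow2, Rsqr_sqrt by (apply Hh0; auto).
    unfold hh. cbv zeta. field. }
  exists (fun t => sqrt (hh k n D t)).
  split; [|split; [|split]].
  - intros t ht.
    assert (Hc : continuity_pt (fun t => sqrt (hh k n D t)) t).
    { apply (continuity_pt_comp (hh k n D) sqrt).
      - unfold hh. reg.
      - apply continuity_pt_sqrt, Hh0; auto. }
    intros eps he. destruct (Hc eps he) as [alp [ha Hal]].
    exists alp. split; auto. intros x [hx hd].
    destruct (Req_dec x t) as [e|e].
    + subst x. simpl. unfold R_dist. rewrite Rminus_diag, Rabs_R0. lra.
    + apply Hal. split; auto. split. exact I. auto.
  - intros t ht. rewrite Omega_Om, Omega_Om2. fold D.
    destruct (HF t ht) as (h1 & h2 & h3 & h4). cbv zeta in *.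
    rewrite (val_lem k (IZR n + t) (IZR n + t + D) _ ltac:(lra) ltac:(lra) (Hcol t ht)).
    rewrite (val_lem k (IZR n + t + D) (IZR n + t)); [ring|lra|lra|].
    rewrite Hcol by auto. ring.
  - intros g t ht Hc. rewrite Omega_Om, Omega_Om2 in *. fold D in Hc |- *.
    destruct (HF t ht) as (h1 & h2 & h3 & h4). cbv zeta in *.
    set (P := IZR n + t) in *. set (Q := P + D) in *.
    assert (HN : k ^ 4 * P * Q * (P ^ 2 + P * Q + Q ^ 2 - 1) + 3 * g ^ 2 = 0).
    { assert (HQP : Q - P = D) by (unfold Q; ring).
      rewrite diff_lem by lra. rewrite Hc. field. lra. }
    rewrite (val_lem k P Q g ltac:(lra) ltac:(lra) ltac:(lra)).
    destruct (Req_dec (P + Q) 0) as [e|e].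
    + right.
      assert (Hz : IZR (- (2 * n + Z.of_nat Delta)) = 2 * t).
      { rewrite opp_IZR, plus_IZR, mult_IZR, <- INR_IZR_INZ. fold D.
        unfold Q, P in e. lra. }
      destruct ht as [t0 t1].
      assert (z0 : (0 < - (2 * n + Z.of_nat Delta))%Z) by (apply lt_IZR; lra).
      assert (z1 : (- (2 * n + Z.of_nat Delta) <= 1)%Z) by (apply le_IZR; lra).
      assert (Hz1 : (- (2 * n + Z.of_nat Delta) = 1)%Z) by lia.
      rewrite Hz1 in Hz.
      split; [|split; [lia|lra]].
      destruct (Nat.Even_or_Odd Delta) as [[m hm]|ho]; auto. lia.
    + left. intro H0.
      apply Rmult_integral in H0. destruct H0 as [H0|H0].
      * apply Rmult_integral in H0. destruct H0 as [H0|H0]; [|lra].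
        assert (0 < k ^ 3) by (apply pow_lt; lra). lra.
      * lra.
  - intros ho h2n.
    assert (ht : tau_range (1/2)) by (unfold tau_range; lra).
    assert (HPQ : (IZR n + 1/2) + (IZR n + 1/2 + D) = 0).
    { apply (f_equal IZR) in h2n. rewrite mult_IZR, opp_IZR, plus_IZR, <- INR_IZR_INZ in h2n.
      fold D in h2n. lra. }
    destruct (HF _ ht) as (h1 & h2' & h3 & h4). cbv zeta in *.
    rewrite Omega_Om, Omega_Om2. fold D.
    rewrite (val_lem k (IZR n + 1/2) (IZR n + 1/2 + D) _ ltac:(lra) ltac:(lra) (Hcol _ ht)).
    rewrite HPQ. split; [ring|].
    rewrite (val_lem k (IZR n + 1/2 + D) (IZR n + 1/2)); [ | lra | lra | ].
    + replace (IZR n + 1 / 2 + D + (IZR n + 1 / 2)) with 0 by lra. ring.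
    + rewrite Hcol by auto. ring.
Qed.
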